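(* Let $A\in\mathcal{C}_n$, let $u$ be a zero of $A$ with $\operatorname{Supp}(u)=I$, $|I|=k$, and let $K=\mathbb{R}^k_+\cap\ker A_I$. Let $v\in\mathbb{R}^n$ be a nonzero vector with $\operatorname{Supp}(v)\subset I$. Then $v$ is a minimal zero of $A$ if and only if $v_I$ is an extremal element of the cone $K$ (i.e., whenever $v_I=x+y$ with $x,y\in K$, both $x,y$ are nonnegative multiples of $v_I$).
   Context: $\mathcal{C}_n$ denotes the cone of copositive matrices: real symmetric $n\times n$ matrices $A$ with $x^TAx\ge 0$ for all $x\in\mathbb{R}^n_+$. A zero of $A$ is a nonzero $u\in\mathbb{R}^n_+$ with $u^TAu=0$; $\operatorname{Supp}(u)=\{i:u_i\ne0\}$; a zero $u$ is minimal if there is no zero $v$ with $\operatorname{Supp}(v)\subsetneq\operatorname{Supp}(u)$. For $I\subset\{1,\dots,n\}$, $A_I=(A_{ij})_{i,j\in I}$ and $v_I=(v_i)_{i\in I}$. *)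

(* Defs.v *)
From HB Require Import structures.
From mathcomp Require Import all_boot all_order all_algebra.
Set Implicit Arguments. Unset Strict Implicit. Unset Printing Implicit Defensive.
Import Order.TTheory GRing.Theory Num.Theory.
Local Open Scope ring_scope.

Section CopositiveDefs.
Variable R : realFieldType.

Definition nonneg_vec (n : nat) (x : 'cV[R]_n) : Prop := forall i, 0 <= x i 0.

Definition qform (n : nat) (A : 'M[R]_n) (x : 'cV[R]_n) : R := (x^T *m A *m x) 0 0.

Definition copositive (n : nat) (A : 'M[R]_n) : Prop :=
  A^T = A /\ forall x : 'cV[R]_n, nonneg_vec x -> 0 <= qform A x.

Definition supp (n : nat) (x : 'cV[R]_n) : {set 'I_n} := [set i | x i 0 != 0].

Definition is_zero (n : nat) (A : 'M[R]_n) (u : 'cV[R]_n) : Prop :=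
  nonneg_vec u /\ u != 0 /\ qform A u = 0.

Definition minimal_zero (n : nat) (A : 'M[R]_n) (u : 'cV[R]_n) : Prop :=
  is_zero A u /\ ~ (exists v : 'cV[R]_n, is_zero A v /\ supp v \proper supp u).

(* principal submatrix A_I and subvector v_I, indices of I in increasing order
   via enum_val : 'I_#|I| -> 'I_n *)
Definition submx_I (n : nat) (I : {set 'I_n}) (A : 'M[R]_n) : 'M[R]_#|I| :=
  \matrix_(i, j) A (enum_val i) (enum_val j).
Definition subvec_I (n : nat) (I : {set 'I_n}) (v : 'cV[R]_n) : 'cV[R]_#|I| :=
  \col_i v (enum_val i) 0.

Definition inK (n : nat) (A : 'M[R]_n) (I : {set 'I_n}) (x : 'cV[R]_#|I|) : Prop :=
  nonneg_vec x /\ submx_I I A *m x = 0.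

Definition extremal (k : nat) (K : 'cV[R]_k -> Prop) (x : 'cV[R]_k) : Prop :=
  K x /\ forall y z : 'cV[R]_k, K y -> K z -> x = y + z ->
    (exists a : R, 0 <= a /\ y = a *: x) /\ (exists b : R, 0 <= b /\ z = b *: x).

End CopositiveDefs.

Arguments inK {R n} A I x.
Arguments subvec_I {R n} I v.
Arguments submx_I {R n} I A.

(* Main.v *)
Require Import Defs.
From HB Require Import structures.
From mathcomp Require Import all_boot all_order all_algebra.
From mathcomp Require Import ring lra.
Import Order.TTheory GRing.Theory Num.Theory.
Set Implicit Arguments. Unset Strict Implicit. Unset Printing Implicit Defensive.
Local Open Scope ring_scope.

Section Aux.
Variable R : realFieldType.
Variable n : nat.
Variable A : 'M[R]_n.
Variable I : {set 'I_n}.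

Definition SI (x : 'cV[R]_n) := forall j, j \notin I -> x j 0 = 0.

Definition ext (y : 'cV[R]_#|I|) : 'cV[R]_n :=
  \col_j \sum_(i < #|I| | enum_val i == j) y i 0.

Lemma ext_S (y : 'cV[R]_#|I|) : SI (ext y).
Proof.
move=> j Hj; rewrite mxE big1 // => i /eqP Ei.
by move: (enum_valP i); rewrite Ei (negbTE Hj).
Qed.

Lemma subvec_ext (y : 'cV[R]_#|I|) : subvec_I I (ext y) = y.
Proof.
apply/matrixP => k l; rewrite !mxE (ord1 l) (big_pred1 k) // => i.
by rewrite (inj_eq enum_val_inj).
Qed.

Lemma S_eq (x y : 'cV[R]_n) : SI x -> SI y -> subvec_I I x = subvec_I I y -> x = y.
Proof.
move=> Sx Sy E; apply/matrixP => j l; rewrite (ord1 l).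
case: (boolP (j \in I)) => Hj; last by rewrite Sx ?Sy.
have := congr1 (fun M : 'cV[R]_#|I| => M (enum_rank_in Hj j) 0) E.
by rewrite !mxE enum_rankK_in.
Qed.

Lemma subvecZ (a : R) (x : 'cV[R]_n) : subvec_I I (a *: x) = a *: subvec_I I x.
Proof. by apply/matrixP => i j; rewrite !mxE. Qed.

Lemma subvecD (x y : 'cV[R]_n) : subvec_I I (x + y) = subvec_I I x + subvec_I I y.
Proof. by apply/matrixP => i j; rewrite !mxE. Qed.

Lemma mul_sub (x : 'cV[R]_n) i : SI x ->
  (submx_I I A *m subvec_I I x) i 0 = (A *m x) (enum_val i) 0.
Proof.
move=> Sx; rewrite !mxE.
rewrite (bigID (fun j => j \in I)) /= [X in _ = _ + X]big1 ?addr0; last first.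
  by move=> j Hj; rewrite Sx // mulr0.
rewrite [RHS]big_enum_val /=; apply: eq_bigr => k _; rewrite !mxE //.
Qed.

Definition Kf (x : 'cV[R]_n) :=
  nonneg_vec x /\ forall i, i \in I -> (A *m x) i 0 = 0.

Lemma L1 (x : 'cV[R]_n) : SI x -> (inK A I (subvec_I I x) <-> Kf x).
Proof.
move=> Sx; split.
  case=> Hn Hk; split.
    move=> j; case: (boolP (j \in I)) => Hj; last by rewrite Sx.
    by have := Hn (enum_rank_in Hj j); rewrite mxE enum_rankK_in.
  move=> i Hi; rewrite -(enum_rankK_in Hi Hi) -mul_sub // Hk mxE //.
case=> Hn Hk; split.
  by move=> j; rewrite mxE.
apply/matrixP => i l; rewrite (ord1 l) mul_sub // Hk ?mxE //; exact: enum_valP.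
Qed.

Definition B (x y : 'cV[R]_n) := (x^T *m A *m y) 0 0.

Lemma B_sum (x y : 'cV[R]_n) : B x y = \sum_i x i 0 * (A *m y) i 0.
Proof. by rewrite /B -mulmxA mxE; apply: eq_bigr => i _; rewrite mxE. Qed.

Lemma B_sym (x y : 'cV[R]_n) : A^T = A -> B x y = B y x.
Proof.
move=> HA; rewrite /B.
have H (M : 'M[R]_1) : M 0 0 = M^T 0 0 by rewrite mxE.
rewrite [LHS]H.
by rewrite !trmx_mul trmxK HA mulmxA.
Qed.

Lemma B_addl (x1 x2 : 'cV[R]_n) (a : R) (y : 'cV[R]_n) : B (x1 + a *: x2) y = B x1 y + a * B x2 y.
Proof.
rewrite !B_sum mulr_sumr -big_split; apply: eq_bigr => i _.
by rewrite !mxE mulrDl mulrA.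
Qed.

Lemma qform_B (x : 'cV[R]_n) : qform A x = B x x.
Proof. by []. Qed.

Lemma real_aux (a c : R) : (forall t, 0 < t -> 0 <= 2 * t * a + t ^+ 2 * c) -> 0 <= a.
Proof.
move=> H; rewrite leNgt; apply/negP => Ha.
case: (lerP c 0) => Hc.
  by have := H 1 ltr01; lra.
set t := - a / c.
have tc : t * c = - a by rewrite /t mulrAC -mulrA divff ?mulr1 // gt_eqF.
have tp : 0 < t by rewrite /t divr_gt0 // oppr_gt0.
have := H t tp; rewrite expr2; nra.
Qed.

Lemma zero_Age (x : 'cV[R]_n) : copositive A -> nonneg_vec x -> qform A x = 0 ->
  forall i, 0 <= (A *m x) i 0.
Proof.
case=> HA Hc Hn Hq i.
set z : 'cV[R]_n := delta_mx i 0.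
have Bz : B z x = (A *m x) i 0.
  rewrite B_sum (bigD1 i) //= big1 ?addr0.
    by rewrite /z mxE !eqxx mul1r.
  by move=> j Hj; rewrite /z mxE (negbTE Hj) mul0r.
apply: (@real_aux _ (B z z)) => t Ht.
have := Hc (x + t *: z).
rewrite qform_B B_addl (B_sym x) // (B_sym z) // !B_addl -qform_B Hq.
rewrite (B_sym x z) // Bz => H.
have : 0 <= 0 + t * (A *m x) i 0 + t * ((A *m x) i 0 + t * B z z).
  apply: H => j; rewrite !mxE; apply: addr_ge0 => //.
  by apply: mulr_ge0; [exact: ltW | case: eqP => _ //=; rewrite ler01].
move=> H2; rewrite expr2; lra.
Qed.

Lemma zero_ker (u x : 'cV[R]_n) : copositive A -> is_zero A u -> supp u = I ->
  nonneg_vec x -> qform A x = 0 -> SI x -> forall i, i \in I -> (A *m x) i 0 = 0.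
Proof.
move=> HA [Hun [Hu0 Huq]] Hsu Hxn Hxq Sx.
have HAs := HA.1.
have Au : forall i, i \in I -> (A *m u) i 0 = 0.
  move=> i Hi.
  have Hg : forall j, predT j -> 0 <= u j 0 * (A *m u) j 0.
    by move=> j _; apply: mulr_ge0; [exact: Hun | exact: zero_Age].
  have Hs : \sum_(j | predT j) u j 0 * (A *m u) j 0 = 0 by rewrite -B_sum.
  have /eqP := psumr_eq0P Hg Hs (i := i) isT.
  rewrite mulf_eq0 => /orP [] /eqP // ui0.
  by move: Hi; rewrite -Hsu inE ui0 eqxx.
have Bux : B u x = 0.
  rewrite B_sym // B_sum big1 // => i _.
  case: (boolP (i \in I)) => Hi; first by rewrite Au // mulr0.
  by rewrite Sx // mul0r.
move=> i Hi.
have Hg : forall j, predT j -> 0 <= u j 0 * (A *m x) j 0.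
  by move=> j _; apply: mulr_ge0; [exact: Hun | exact: zero_Age].
have Hs : \sum_(j | predT j) u j 0 * (A *m x) j 0 = 0 by rewrite -B_sum.
have /eqP := psumr_eq0P Hg Hs (i := i) isT.
rewrite mulf_eq0 => /orP [] /eqP // ui0.
by move: Hi; rewrite -Hsu inE ui0 eqxx.
Qed.

Lemma ker_zero (x : 'cV[R]_n) : SI x -> (forall i, i \in I -> (A *m x) i 0 = 0) ->
  qform A x = 0.
Proof.
move=> Sx Hk; rewrite qform_B B_sum big1 // => i _.
case: (boolP (i \in I)) => Hi; first by rewrite Hk // mulr0.
by rewrite Sx // mul0r.
Qed.

Lemma min_helper (p q : 'cV[R]_n) : nonneg_vec p -> nonneg_vec q ->
  (exists j0, 0 < q j0 0) ->
  exists j t, [/\ 0 < q j 0, p j 0 = t * q j 0 & forall i, 0 <= p i 0 - t * q i 0].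
Proof.
move=> Hp Hq [j0 Hj0].
case: (@arg_minP _ _ _ j0 (fun j => 0 < q j 0) (fun j => p j 0 / q j 0) Hj0) => j Pj Hmin.
exists j, (p j 0 / q j 0); split => //; first by rewrite divfK // gt_eqF.
move=> i; case: (ltrP 0 (q i 0)) => Hqi.
  rewrite {1}(_ : p i 0 = p i 0 / q i 0 * q i 0); last by rewrite divfK // gt_eqF.
  by rewrite -mulrBl mulr_ge0 ?subr_ge0 ?(Hmin i) // ltW.
have -> : q i 0 = 0 by apply/le_anti; rewrite Hqi Hq.
by rewrite mulr0 subr0.
Qed.

End Aux.

Lemma subZE (R : realFieldType) (n : nat) (M N : 'cV[R]_n) (t : R) i :
  (M - t *: N) i 0 = M i 0 - t * N i 0.
Proof. by rewrite !mxE. Qed.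

Lemma ZE (R : realFieldType) (n : nat) (N : 'cV[R]_n) (t : R) i :
  (t *: N) i 0 = t * N i 0.
Proof. by rewrite !mxE. Qed.

Theorem lemma3p4 (R : realFieldType) (n : nat) (A : 'M[R]_n) (u : 'cV[R]_n)
    (I : {set 'I_n}) (v : 'cV[R]_n) :
  copositive A -> is_zero A u -> supp u = I ->
  v != 0 -> supp v \subset I ->
  (minimal_zero A v <-> extremal (inK A I) (subvec_I I v)).
Proof.
move=> HA Hu Hsu Hv0 Hsv.
have Ssub : forall w : 'cV[R]_n, supp w \subset I -> SI I w.
  move=> w Hw j Hj; apply/eqP; apply: (contraNT _ Hj) => Hj'.
  by apply: (subsetP Hw); rewrite inE.
have Sv := Ssub v Hsv.
have Kzero : forall w, SI I w -> is_zero A w <-> (Kf A I w /\ w != 0).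
  move=> w Sw; split.
    case=> Hn [Hnz Hq]; split => //; split => //.
    exact: (zero_ker HA Hu Hsu Hn Hq Sw).
  by case=> [[Hn Hk] Hnz]; split => //; split => //; exact: (ker_zero Sw Hk).
have pos_of : forall w : 'cV[R]_n, nonneg_vec w -> w != 0 -> exists j0, 0 < w j0 0.
  move=> w Hn Hw; case: (pickP (fun j => w j 0 != 0)) => [j Hj|H].
    by exists j; rewrite lt_def Hj Hn.
  by move: Hw; rewrite (_ : w = 0) ?eqxx //; apply/matrixP => i l; rewrite (ord1 l) mxE; apply/eqP/negbFE/H.
split.
- case=> Hz Hmin.
  have Kv : Kf A I v by case: ((Kzero v Sv).1 Hz).
  split; first by apply/L1.
  suff key : forall y z, inK A I y -> inK A I z -> subvec_I I v = y + z ->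
      exists a : R, 0 <= a /\ y = a *: subvec_I I v.
    move=> y z Ky Kz E; split; first exact: (key y z).
    by apply: (key z y) => //; rewrite addrC.
  move=> y z Ky Kz E.
  set yh := ext y; set zh := ext z.
  have Sy : SI I yh := ext_S y.
  have Sz : SI I zh := ext_S z.
  have Ky' : Kf A I yh by apply/L1 => //; rewrite subvec_ext.
  have Kz' : Kf A I zh by apply/L1 => //; rewrite subvec_ext.
  have Hyy : subvec_I I yh = y by rewrite subvec_ext.
  have Hzz : subvec_I I zh = z by rewrite subvec_ext.
  clearbody yh zh.
  have Evv : v = yh + zh.
    apply: (S_eq (I:=I)) => //; first by move=> j Hj; rewrite mxE Sy // Sz // addr0.
    by rewrite subvecD Hyy Hzz.
  have yle : forall i, yh i 0 <= v i 0.
    move=> i; have -> : v i 0 = yh i 0 + zh i 0 by rewrite Evv !mxE.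
    by have := Kz'.1 i; lra.
  case: (eqVneq yh 0) => [y0|ynz].
    exists 0; split => //; rewrite scale0r -Hyy y0.
    by apply/matrixP => i j; rewrite !mxE.
  have [j [t [Hqj Epj Hge]]] := min_helper Kv.1 Ky'.1 (pos_of _ Ky'.1 ynz).
  have tpos : 0 < t.
    have := yle j; rewrite Epj => H1; nra.
  set w := v - t *: yh.
  have Sw : SI I w by move=> i Hi; rewrite !mxE Sv // Sy // mulr0 subr0.
  have Kw : Kf A I w.
    split; first by move=> i; rewrite !mxE.
    by move=> i Hi; rewrite mulmxBr -scalemxAr subZE Kv.2 // Ky'.2 // mulr0 subr0.
  case: (eqVneq w 0) => [w0|wnz].
    have Ev : v = t *: yh by apply/eqP; rewrite -subr_eq0 -/w w0.
    exists t^-1; split; first by rewrite invr_ge0 ltW.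
    by rewrite Ev subvecZ Hyy scalerA mulVf ?scale1r // gt_eqF.
  exfalso; apply: Hmin; exists w; split; first by apply/Kzero.
  rewrite properE; apply/andP; split.
    apply/subsetP => i; rewrite !inE; apply: contraNneq => vi0.
    have yi0 : yh i 0 = 0 by have := yle i; have := Ky'.1 i; rewrite vi0 => h1 h2; apply/le_anti; rewrite h1 h2.
    by rewrite !mxE vi0 yi0 mulr0 subr0.
  apply/subsetPn; exists j; rewrite !inE.
    by rewrite Epj mulf_neq0 // gt_eqF.
  by rewrite !mxE Epj subrr eqxx.
- case=> Kv Hext.
  have Kv' : Kf A I v by apply/L1.
  have Hz : is_zero A v by apply/Kzero.
  split => //; case=> w [Hw Hprop].
  have Hsub := proper_sub Hprop.
  have Sw := Ssub w (subset_trans Hsub Hsv).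
  have [Kw Hw0] := (Kzero w Sw).1 Hw.
  have [j [t [Hqj Epj Hge]]] := min_helper Kv'.1 Kw.1 (pos_of _ Kw.1 Hw0).
  have vjn : v j 0 != 0.
    by have := subsetP Hsub j; rewrite !inE gt_eqF //; apply.
  have tge : 0 <= t by have := Kv'.1 j; rewrite Epj => H1; nra.
  set r := v - t *: w.
  have Sr : SI I r by move=> i Hi; rewrite !mxE Sv // Sw // mulr0 subr0.
  have Swt : SI I (t *: w) by move=> i Hi; rewrite !mxE Sw // mulr0.
  have Kr : inK A I (subvec_I I r).
    apply/L1 => //; split; first by move=> i; rewrite !mxE.
    by move=> i Hi; rewrite mulmxBr -scalemxAr subZE Kv'.2 // Kw.2 // mulr0 subr0.
  have Kt : inK A I (subvec_I I (t *: w)).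
    apply/L1 => //; split; first by move=> i; rewrite !mxE mulr_ge0 // Kw.1.
    by move=> i Hi; rewrite -scalemxAr ZE Kw.2 // mulr0.
  have E : subvec_I I v = subvec_I I (t *: w) + subvec_I I r.
    by rewrite -subvecD /r addrC subrK.
  have [_ [b [hb Eb]]] := Hext _ _ Kt Kr E.
  have Erb : r = b *: v.
    apply: (S_eq (I:=I)) => //; last by rewrite subvecZ.
    by move=> i Hi; rewrite mxE Sv // mulr0.
  have b0 : b = 0.
    have := congr1 (fun M : 'cV[R]_n => M j 0) Erb.
    rewrite /r !mxE -Epj subrr => /esym /eqP; rewrite mulf_eq0 (negbTE vjn) orbF.
    by move/eqP.
  have Ev : v = t *: w by apply/eqP; rewrite -subr_eq0 -/r Erb b0 scale0r.
  move: Hprop; rewrite properE => /andP [_ /negP]; apply.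
  apply/subsetP => i; rewrite !inE; apply: contra => /eqP wi0.
  by rewrite Ev mxE wi0 mulr0.
Qed.
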